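(* Let $\mathcal{X}=\{x_1,\dots,x_n\}$ be a finite set of $n$ categories, let $\mathcal{Q}$ be a set of probability distributions on $\mathcal{X}$, let $\epsilon\in(0,1)$, and let $X=(X_1,\dots,X_p)\in\mathcal{X}^p$. If $$\inf_{Q\in\mathcal{Q}} D(\widehat{P}(X)\,\|\,Q)\;\geq\;\frac{1}{p}\log\left(\frac{1}{\epsilon}\right)+\frac{2n}{p}\log(p+1),$$ then $X$ is contaminated at significance level $\epsilon$ with respect to $\mathcal{Q}$, i.e. $X$ is not typical at significance level $\epsilon$ with respect to $\mathcal{Q}$.
   Context: For $X=(X_1,\dots,X_p)\in\mathcal{X}^p$, the empirical distribution is $\widehat{P}(X)=\frac1p(p_1,\dots,p_n)$ where $p_i=\sum_{j=1}^p\mathbf{1}\{X_j=x_i\}$. An ''empirical distribution (of $p$ samples over $n$ categories)'' is any vector of this form. For a distribution $Q$ on $\mathcal{X}$ and a set $\mathcal{S}$ of empirical distributions of $p$ samples, $\mathbb{P}_Q(\mathcal{S})$ denotes the probability that $p$ i.i.d. draws from $Q$ have empirical distribution in $\mathcal{S}$. The Kullback–Leibler divergence is $D(P\|Q)=\sum_i P_i\log(P_i/Q_i)$. Typical: let $\widehat{P}^1,\widehat{P}^2,\dots$ be an ordering of all empirical distributions of $p$ samples over the $n$ categories such that $\mathbb{P}_Q(\widehat{P}^1)\le\mathbb{P}_Q(\widehat{P}^2)\le\cdots$ (the ordering depends on $Q$). A sequence $X$ with $\widehat{P}(X)=\widehat{P}^\ell$ is typical at significance level $\epsilon$ with respect to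 $\mathcal{Q}$ iff $\sup_{Q\in\mathcal{Q}}\mathbb{P}_Q(\{\widehat{P}^1,\dots,\widehat{P}^\ell\})\ge\epsilon$ for any such ordering. $X$ is contaminated (at significance $\epsilon$ with respect to $\mathcal{Q}$) iff it is not typical. *)

(* Defs.v *)
From HB Require Import structures.
From mathcomp Require Import all_boot all_order all_algebra.
From mathcomp Require Import all_classical all_reals all_analysis.
Set Implicit Arguments. Unset Strict Implicit. Unset Printing Implicit Defensive.
Import Order.TTheory GRing.Theory Num.Theory.
Local Open Scope classical_set_scope.
Local Open Scope ring_scope.

(* Categories x_1..x_n are modelled by 'I_n; a sequence X in X^p by
   {ffun 'I_p -> 'I_n}; a distribution on the categories by a vector
   {ffun 'I_n -> R}. *)

Definition is_dist (R : realType) (n : nat) (Q : {ffun 'I_n -> R}) : Prop :=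
  (forall i, 0 <= Q i) /\ \sum_i Q i = 1.

Definition emp (R : realType) (n p : nat) (X : {ffun 'I_p -> 'I_n})
  : {ffun 'I_n -> R} :=
  [ffun i => #|[set j | X j == i]|%:R / p%:R].

Definition is_empirical (R : realType) (n p : nat) (P : {ffun 'I_n -> R}) : Prop :=
  exists X : {ffun 'I_p -> 'I_n}, P = emp R X.

Definition probQ (R : realType) (n p : nat) (Q P : {ffun 'I_n -> R}) : R :=
  \sum_(Y : {ffun 'I_p -> 'I_n} | emp R Y == P) \prod_(j < p) Q (Y j).

Definition valid_ordering (R : realType) (n p : nat) (Q : {ffun 'I_n -> R})
    (s : seq {ffun 'I_n -> R}) : Prop :=
  [/\ uniq s,
      (forall P, P \in s <-> is_empirical p P) &
      sorted (fun a b => probQ p Q a <= probQ p Q b) s].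

Definition prefix_prob (R : realType) (n p : nat) (Q : {ffun 'I_n -> R})
    (s : seq {ffun 'I_n -> R}) (P : {ffun 'I_n -> R}) : R :=
  \sum_(P' <- take (index P s).+1 s) probQ p Q P'.

Definition typical (R : realType) (n p : nat) (eps : R)
    (Qs : set {ffun 'I_n -> R}) (X : {ffun 'I_p -> 'I_n}) : Prop :=
  forall ord : {ffun 'I_n -> R} -> seq {ffun 'I_n -> R},
    (forall Q, Qs Q -> valid_ordering p Q (ord Q)) ->
    (eps%:E <= ereal_sup [set (prefix_prob p Q (ord Q) (emp R X))%:E | Q in Qs])%E.

Definition contaminated (R : realType) (n p : nat) (eps : R)
    (Qs : set {ffun 'I_n -> R}) (X : {ffun 'I_p -> 'I_n}) : Prop :=
  ~ typical eps Qs X.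

(* Kullback-Leibler divergence (natural log), with 0 log 0 = 0 and
   value +oo if some P_i > 0 has Q_i = 0. *)
Definition KL (R : realType) (n : nat) (P Q : {ffun 'I_n -> R}) : \bar R :=
  if [exists i, (0 < P i) && (Q i == 0)] then +oo%E
  else (\sum_(i | 0 < P i) P i * ln (P i / Q i))%:E.

(* Main.v *)
Require Import Defs.
From HB Require Import structures.
From mathcomp Require Import all_boot all_order all_algebra.
From mathcomp Require Import all_classical all_reals all_analysis.
Import Order.TTheory GRing.Theory Num.Theory.
Local Open Scope classical_set_scope.
Local Open Scope ring_scope.
Set Implicit Arguments. Unset Strict Implicit. Unset Printing Implicit Defensive.
From mathcomp Require Import ring lra.
Lemma count_sum (R : realType) n p (Y : {ffun 'I_p -> 'I_n}) (g : 'I_n -> R) :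
  \sum_(j < p) g (Y j) = \sum_i #|[set j | Y j == i]|%:R * g i.
Proof.
rewrite (partition_big Y xpredT) //=; apply: eq_bigr => i _.
rewrite (eq_bigr (fun=> g i)) => [|j /eqP->//].
rewrite sumr_const mulr_natl; congr (_ *+ _); apply: eq_card => j.
apply/idP/idP; rewrite in_setE /=; by [].
Qed.

Definition cnt n p (Y : {ffun 'I_p -> 'I_n}) (i : 'I_n) : nat := #|[set j | Y j == i]|.

Lemma empE (R : realType) n p (Y : {ffun 'I_p -> 'I_n}) i :
  emp R Y i = (cnt Y i)%:R / p%:R.
Proof. by rewrite /emp ffunE. Qed.

Lemma emp_ge0 (R : realType) n p (Y : {ffun 'I_p -> 'I_n}) i : 0 <= emp R Y i.
Proof. by rewrite empE divr_ge0. Qed.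

Lemma sum_cnt n p (Y : {ffun 'I_p -> 'I_n}) (R : realType) :
  \sum_i ((cnt Y i)%:R : R) = p%:R.
Proof.
have := count_sum Y (fun _ => (1 : R)).
rewrite sumr_const card_ord => ->; apply: eq_bigr => i _; by rewrite mulr1.
Qed.

Lemma sum_emp (R : realType) n p (Y : {ffun 'I_p -> 'I_n}) :
  (0 < p)%N -> \sum_i emp R Y i = 1.
Proof.
move=> p0; rewrite (eq_bigr (fun i => (cnt Y i)%:R / p%:R)) => [|i _]; last by rewrite empE.
by rewrite -mulr_suml sum_cnt divff // pnatr_eq0 -lt0n.
Qed.

Lemma cnt_pos n p (Y : {ffun 'I_p -> 'I_n}) j : (0 < cnt Y (Y j))%N.
Proof.
rewrite /cnt; apply/card_gt0P; exists j.
by rewrite in_setE /=.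
Qed.

Lemma emp_pos (R : realType) n p (Y : {ffun 'I_p -> 'I_n}) j : 0 < emp R Y (Y j).
Proof.
have p0 := leq_ltn_trans (leq0n j) (ltn_ord j).
by rewrite empE divr_gt0 // ltr0n ?cnt_pos.
Qed.

Lemma probQ_le (R : realType) n p (Q : {ffun 'I_n -> R}) (X : {ffun 'I_p -> 'I_n}) :
  (0 < p)%N -> (forall i, 0 <= Q i) ->
  ~~ [exists i, (0 < emp R X i) && (Q i == 0)] ->
  probQ p Q (emp R X) <=
  expR (- (p%:R * \sum_(i | 0 < emp R X i) emp R X i * ln (emp R X i / Q i))).
Proof.
move=> p0 Q0 /existsPn nex.
set P := emp R X; set D := \sum_(i | 0 < P i) _.
have H (Y : {ffun 'I_p -> 'I_n}) : emp R Y == P -> \prod_j Q (Y j) = \prod_j P (Y j) * expR (- (p%:R * D)).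
  move=> /eqP eY.
  have Ppos j : 0 < P (Y j) by rewrite -eY emp_pos.
  have Qpos j : 0 < Q (Y j).
    rewrite lt0r Q0 andbT; apply/negP => /eqP Qe.
    by move: (nex (Y j)); rewrite Ppos Qe eqxx.
  rewrite (eq_bigr (fun j => expR (ln (Q (Y j))))) => [|j _]; last by rewrite lnK // posrE.
  rewrite [\prod_j P _](eq_bigr (fun j => expR (ln (P (Y j))))) => [|j _]; last by rewrite lnK // posrE.
  rewrite -!expR_sum -expRD; congr expR.
  have -> : p%:R * D = \sum_j (ln (P (Y j)) - ln (Q (Y j))).
    rewrite (eq_bigr (fun j => ln (P (Y j) / Q (Y j)))) => [|j _]; last first.
      by rewrite lnM ?posrE ?invr_gt0 // lnV ?posrE.
    rewrite (count_sum Y (fun i => ln (P i / Q i))) /D mulr_sumr.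
    rewrite [RHS](bigID (fun i => 0 < P i)) /= [X in _ = _ + X]big1 ?addr0 => [|i].
      apply: eq_bigr => i _.
      rewrite mulrA; congr (_ * _); rewrite -eY empE mulrCA divff ?mulr1 //.
      by rewrite pnatr_eq0 -lt0n.
    have : cnt Y i = #|[set j | Y j == i]| by [].
    move=> <-; rewrite -eY empE => hi.
    suff -> : cnt Y i = 0%N by rewrite mul0r.
    apply/eqP; move: hi; apply: contraNT; rewrite -lt0n => hc.
    by rewrite divr_gt0 // ltr0n.
  by rewrite sumrB opprB addrCA subrr addr0.
rewrite /probQ (eq_bigr _ H) -mulr_suml.
rewrite -[X in _ <= X]mul1r ler_wpM2r ?expR_ge0 //.
apply: le_trans (_ : \sum_(Y : {ffun 'I_p -> 'I_n}) \prod_j P (Y j) <= 1).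
  rewrite [X in _ <= X](bigID (fun Y => emp R Y == P)) /= lerDl.
  by apply: sumr_ge0 => Y _; apply: prodr_ge0 => j _; apply: emp_ge0.
rewrite -(bigA_distr_bigA (fun (j : 'I_p) i => P i)) /=.
rewrite (eq_bigr (fun=> 1)); first by rewrite big1_eq.
by move=> j _; rewrite sum_emp.
Qed.

Lemma probQ_ge0 (R : realType) n p (Q P : {ffun 'I_n -> R}) :
  (forall i, 0 <= Q i) -> 0 <= probQ p Q P.
Proof. by move=> Q0; apply: sumr_ge0 => Y _; apply: prodr_ge0 => j _. Qed.

Lemma probQ_zero (R : realType) n p (Q : {ffun 'I_n -> R}) (X : {ffun 'I_p -> 'I_n}) :
  [exists i, (0 < emp R X i) && (Q i == 0)] -> probQ p Q (emp R X) = 0.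
Proof.
case/existsP => i /andP [Pi /eqP Qi]; rewrite /probQ big1 // => Y /eqP eY.
have : (0 < cnt Y i)%N.
  move: Pi; rewrite -eY empE lt0n; apply: contraTneq => ->; by rewrite mul0r ltxx.
rewrite /cnt => /card_gt0P [j]; rewrite in_setE /= => /eqP Yj.
by rewrite (bigD1 j) //= Yj Qi mul0r.
Qed.

Definition s0 (R : realType) n p : seq {ffun 'I_n -> R} :=
  undup [seq emp R Y | Y <- enum {ffun 'I_p -> 'I_n}].

Definition ordQ (R : realType) n p (Q : {ffun 'I_n -> R}) :=
  sort (fun a b => probQ p Q a <= probQ p Q b) (s0 R n p).

Lemma ordQ_valid (R : realType) n p (Q : {ffun 'I_n -> R}) :
  valid_ordering p Q (ordQ p Q).
Proof.
split.
- by rewrite sort_uniq undup_uniq.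
- move=> P; rewrite mem_sort mem_undup; split.
    by case/mapP => Y _ ->; exists Y.
  by case=> Y ->; apply: map_f; rewrite mem_enum.
- by apply: sort_sorted => a b; apply: le_total.
Qed.

Lemma size_ordQ (R : realType) n p (Q : {ffun 'I_n -> R}) :
  (size (ordQ p Q) <= p.+1 ^ n)%N.
Proof.
rewrite size_sort.
pose g (c : {ffun 'I_n -> 'I_p.+1}) : {ffun 'I_n -> R} := [ffun i => (c i : nat)%:R / p%:R].
have -> : (p.+1 ^ n = size [seq g c | c <- enum {ffun 'I_n -> 'I_p.+1}])%N.
  by rewrite size_map -cardE card_ffun !card_ord.
apply: uniq_leq_size; first exact: undup_uniq.
move=> x; rewrite mem_undup => /mapP [Y _ ->].
apply/mapP; exists [ffun i => inord (cnt Y i)]; first by rewrite mem_enum.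
apply/ffunP => i; rewrite /g !ffunE inordK //.
rewrite ltnS /cnt; apply: leq_trans (max_card _) _; by rewrite card_ord.
Qed.

Lemma prefix_le (R : realType) n p (Q : {ffun 'I_n -> R}) s P :
  (forall i, 0 <= Q i) -> valid_ordering p Q s -> P \in s ->
  prefix_prob p Q s P <= (size s)%:R * probQ p Q P.
Proof.
move=> Q0 [_ _ srt] Ps.
have ks : (index P s < size s)%N by rewrite index_mem.
rewrite /prefix_prob (big_nth P) size_take.
set m := (if _ then _ else _).
have mk : (m <= (index P s).+1)%N by rewrite /m; case: ifP => // /negbT; rewrite -leqNgt.
have ms : (m <= size s)%N by rewrite /m; case: ifP => // /ltnW.
apply: le_trans (_ : \sum_(0 <= i < m) probQ p Q P <= _).
  rewrite !big_nat; apply: ler_sum => i /andP [_ im].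
  rewrite nth_take; last exact: leq_trans im mk.
  rewrite -[X in _ <= probQ p Q X](nth_index P Ps).
  have tr : transitive (fun a b => probQ p Q a <= probQ p Q b).
    by move=> a b c /= h1 h2; apply: le_trans h1 h2.
  have rf : reflexive (fun a b => probQ p Q a <= probQ p Q b) by move=> a /=.
  apply: (sorted_leq_nth tr rf P srt).
  - by rewrite inE; apply: leq_trans im ms.
  - by rewrite inE ks.
  - by rewrite -ltnS; apply: leq_trans im mk.
rewrite sumr_const_nat subn0 -[_ *+ m]mulr_natl.
apply: ler_wpM2r; [exact: probQ_ge0 | by rewrite ler_nat].
Qed.
Lemma arith1 (R : realType) (p a b L : R) : p != 0 -> p * (p^-1 * a + b / p * L) = a + b * L.
Proof. move=> hp; field. exact hp. Qed.
Lemma arith2 (R : realType) (e N : R) : 0 < e -> 0 < N -> N * (e^-1 * N * N)^-1 = e / N.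
Proof. move=> he hN; field; apply/andP; split; by rewrite gt_eqF. Qed.

Unset Implicit Arguments.
Theorem theorem1 (R : realType) (n p : nat) (Qs : set {ffun 'I_n -> R})
    (eps : R) (X : {ffun 'I_p -> 'I_n}) :
  (0 < p)%N ->
  (forall Q, Qs Q -> is_dist Q) ->
  0 < eps < 1 ->
  (((p%:R)^-1 * ln (eps^-1) + (2 * n)%:R / p%:R * ln (p%:R + 1))%:E
     <= ereal_inf [set KL (emp R X) Q | Q in Qs])%E ->
  contaminated eps Qs X.
Proof.
move=> p0 hQs /andP [e0 e1] hT.
have n0 := leq_ltn_trans (leq0n _) (ltn_ord (X (Ordinal p0))).
set T := (_ + _) in hT.
set P := emp R X.
set N : R := (p.+1 ^ n)%:R.
have N2 : 2 <= N.
  rewrite /N ler_nat; apply: leq_trans (_ : p.+1 ^ 1 <= _)%N.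
    by rewrite expn1 ltnS.
  by rewrite leq_pexp2l.
have N0 : 0 < N by apply: lt_le_trans N2.
have key Q : Qs Q -> prefix_prob p Q (ordQ p Q) P <= eps / 2.
  move=> QQ; have Q0 := (hQs Q QQ).1.
  have Ps : P \in ordQ p Q by have [_ h _] := ordQ_valid p Q; apply/h; exists X.
  apply: le_trans (prefix_le Q0 (ordQ_valid p Q) Ps) _.
  apply: le_trans (_ : N * probQ p Q P <= _).
    apply: ler_wpM2r; first exact: probQ_ge0.
    by rewrite /N ler_nat size_ordQ.
  case: (boolP [exists i, (0 < emp R X i) && (Q i == 0)]) => hex.
    rewrite /P probQ_zero // mulr0; by rewrite divr_ge0 // ltW.
  have hKL : (T%:E <= KL P Q)%E.
    by apply: le_trans hT _; apply: ereal_inf_lbound; exists Q.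
  move: hKL; rewrite /KL (negbTE hex) lee_fin => hD.
  apply: le_trans (_ : N * expR (- (p%:R * T)) <= _).
    apply: ler_wpM2l; first exact: ltW.
    apply: le_trans (probQ_le p0 Q0 hex) _.
    rewrite ler_expR lerN2; apply: ler_wpM2l => //; exact: ler0n.
  have lnN : ln N = n%:R * ln (p%:R + 1).
    by rewrite /N natrX -natr1 lnXn ?mulr_natl // ltr_wpDl.
  have pT : p%:R * T = ln (eps^-1 * N * N).
    rewrite /T arith1 ?pnatr_eq0 -?lt0n // !lnM ?posrE ?invr_gt0 ?mulr_gt0 //.
      by rewrite lnN natrM; ring.
    by rewrite invr_gt0.
  rewrite pT expRN lnK ?posrE ?mulr_gt0 ?invr_gt0 // arith2 //.
  by rewrite ler_pM2l // lef_pV2 ?posrE.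
rewrite /contaminated /typical => H.
have := H (@ordQ R n p) (fun Q _ => ordQ_valid p Q).
apply/negP; rewrite -ltNge.
apply: (@le_lt_trans _ _ (eps / 2)%:E).
  by apply: ge_ereal_sup => _ [Q QQ <-]; rewrite lee_fin key.
by rewrite lte_fin ltr_pdivrMr // ltr_pMr // ltr1n.
Qed.
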